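(* Any $\omega$-recognizable preorder $\preceq$ on $\Sigma^\omega$ can be embedded into an $\omega$-recognizable total preorder $\preceq'$ (i.e., $\preceq\subseteq\preceq'$). Moreover, for all $x,y\in\Sigma^\omega$, if $x\bowtie y$ then $x\bowtie' y$, for each $\bowtie\in\{\preceq,\prec,\succeq,\succ,\sim\}$, where $\bowtie'$ denotes the corresponding relation derived from $\preceq'$.
   Context: A relation on $\Sigma^\omega$ is $\omega$-recognizable if it equals $\bigcup_{k=1}^{\ell}X_k\times Y_k$ with $X_k,Y_k$ $\omega$-regular. A preorder is reflexive and transitive; it is total if for all $x,y$, $x\preceq y$ or $y\preceq x$. From a preorder $\preceq$: $x\succeq y$ iff $y\preceq x$; $x\prec y$ iff $x\preceq y$ and $y\not\preceq x$; $x\succ y$ iff $y\prec x$; $x\sim y$ iff $x\preceq y$ and $y\preceq x$. *)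

(* Defs.v *)
From mathcomp Require Import all_boot.
Set Implicit Arguments. Unset Strict Implicit. Unset Printing Implicit Defensive.

Definition oword (Sigma : finType) := nat -> Sigma.

Record buchi (Sigma : finType) := Buchi {
  b_size : nat;
  b_init : {set 'I_b_size};
  b_delta : 'I_b_size -> Sigma -> {set 'I_b_size};
  b_acc : {set 'I_b_size} }.

Definition buchi_accepts (Sigma : finType) (A : buchi Sigma) (w : oword Sigma) : Prop :=
  exists r : nat -> 'I_(b_size A),
    r 0 \in @b_init _ A /\
    (forall i, r i.+1 \in @b_delta _ A (r i) (w i)) /\
    (forall i, exists j, i <= j /\ r j \in @b_acc _ A).

Definition omega_regular (Sigma : finType) (L : oword Sigma -> Prop) : Prop :=
  exists A : buchi Sigma, forall w, L w <-> buchi_accepts A w.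

Definition omega_recognizable (Sigma : finType)
    (R : oword Sigma -> oword Sigma -> Prop) : Prop :=
  exists (l : nat) (X Y : nat -> oword Sigma -> Prop),
    (forall k, k < l -> omega_regular (X k) /\ omega_regular (Y k)) /\
    (forall x y, R x y <-> exists k, k < l /\ X k x /\ Y k y).

Definition preorder_rel (T : Type) (R : T -> T -> Prop) : Prop :=
  (forall x, R x x) /\ (forall x y z, R x y -> R y z -> R x z).

Definition total_rel (T : Type) (R : T -> T -> Prop) : Prop :=
  forall x y, R x y \/ R y x.

Definition rel_ge (T : Type) (R : T -> T -> Prop) (x y : T) : Prop := R y x.
Definition rel_lt (T : Type) (R : T -> T -> Prop) (x y : T) : Prop := R x y /\ ~ R y x.
Definition rel_gt (T : Type) (R : T -> T -> Prop) (x y : T) : Prop := rel_lt R y x.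
Definition rel_sim (T : Type) (R : T -> T -> Prop) (x y : T) : Prop := R x y /\ R y x.

(* Main.v *)
Require Import Defs.
From mathcomp Require Import all_boot.
From mathcomp Require Import zify.
From Stdlib Require Import ClassicalEpsilon.
Set Implicit Arguments. Unset Strict Implicit.

Definition pb (P : Prop) : bool := if excluded_middle_informative P then true else false.
Lemma pbP P : reflect P (pb P).
Proof. rewrite /pb; case: excluded_middle_informative => h; constructor; done. Qed.

Definition prof (T : Type) l (Y : nat -> T -> Prop) (y : T) : {set 'I_l} :=
  [set k : 'I_l | pb (Y k y)].

Definition cnt (T : Type) l (Y : nat -> T -> Prop) (R : T -> T -> Prop) (x : T) :=
  #|[set p : {set 'I_l} | pb (exists y, prof l Y y = p /\ R y x)]|.

Lemma cnt_mono T l X Y (R : T -> T -> Prop) :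
  (forall x y, R x y <-> exists k, k < l /\ X k x /\ Y k y) -> preorder_rel R ->
  forall x x', R x x' -> cnt l Y R x <= cnt l Y R x'.
Proof.
move=> HR [Hr Ht] x x' h; apply: subset_leq_card; apply/subsetP => p.
rewrite !inE => /pbP [y [<- hy]]; apply/pbP; exists y; split=> //.
exact: (Ht _ _ _ hy h).
Qed.

Lemma cnt_strict T l X Y (R : T -> T -> Prop) :
  (forall x y, R x y <-> exists k, k < l /\ X k x /\ Y k y) -> preorder_rel R ->
  forall x x', R x x' -> ~ R x' x -> cnt l Y R x < cnt l Y R x'.
Proof.
move=> HR [Hr Ht] x x' h hn; apply: proper_card; rewrite properE; apply/andP; split.
  apply/subsetP => p.
  rewrite !inE => /pbP [y [<- hy]]; apply/pbP; exists y; split=> //.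
  exact: (Ht _ _ _ hy h).
apply/subsetPn; exists (prof l Y x'); rewrite inE.
  apply/pbP; exists x'; split => //.
apply/pbP => -[y [hp hy]]; apply: hn.
have [k [hk [hX hY]]] := (HR x' x').1 (Hr x').
have hYy : Y k y.
  have : (Ordinal hk \in prof l Y y) = (Ordinal hk \in prof l Y x') by rewrite hp.
  rewrite !inE /=.
  by move/pbP: hY => ->; move/pbP.
apply: (Ht _ y) => //; apply/HR; exists k; done.
Qed.

Definition empty_buchi (Sigma : finType) : buchi Sigma :=
  @Buchi Sigma 1 set0 (fun _ _ => set0) set0.

Lemma omega_regular_empty (Sigma : finType) (L : oword Sigma -> Prop) :
  (forall w, ~ L w) -> omega_regular L.
Proof.
move=> h; exists (empty_buchi Sigma) => w; split; first by move/h.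
by case=> r [] /=; rewrite inE.
Qed.

Lemma omega_regular_ext (Sigma : finType) (L L' : oword Sigma -> Prop) :
  (forall w, L w <-> L' w) -> omega_regular L -> omega_regular L'.
Proof.
move=> h [A hA]; exists A => w; rewrite -hA; split; apply h.
Qed.

Lemma encode l j k k' : k < l -> k' < l ->
  let n := (j * l + k) * l + k' in
  [/\ n %/ l %/ l = j, n %/ l %% l = k & n %% l = k'].
Proof.
move=> hk hk' /=; have l0 : 0 < l by lia.
rewrite !divnMDl // (divn_small hk') addn0 modnMDl modn_small // divnMDl // (divn_small hk) addn0 modnMDl modn_small //.
Qed.

Lemma encode_lt l N j k k' : k < l -> k' < l -> j < N ->
  (j * l + k) * l + k' < N * l * l.
Proof. move=> hk hk' hj; nia. Qed.

Theorem proposition12 (Sigma : finType) (R : oword Sigma -> oword Sigma -> Prop) :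
  omega_recognizable R -> preorder_rel R ->
  exists R' : oword Sigma -> oword Sigma -> Prop,
    omega_recognizable R' /\ preorder_rel R' /\ total_rel R' /\
    (forall x y, R x y -> R' x y) /\
    (forall x y, R x y -> R' x y) /\
    (forall x y, rel_lt R x y -> rel_lt R' x y) /\
    (forall x y, rel_ge R x y -> rel_ge R' x y) /\
    (forall x y, rel_gt R x y -> rel_gt R' x y) /\
    (forall x y, rel_sim R x y -> rel_sim R' x y).
Proof.
move=> [l [X [Y [Hreg HR]]]] Hpre.
have [Hr Ht] := Hpre.
pose c := cnt l Y R.
have cm := cnt_mono HR Hpre.
have cs := cnt_strict HR Hpre.
have sub : forall x y, R x y -> c x <= c y by [].
have lt : forall x y, rel_lt R x y -> rel_lt (fun x y => c x <= c y) x y.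
  move=> x y [h1 h2]; have := cs _ _ h1 h2; rewrite /c => h; split; lia.
exists (fun x y => c x <= c y); split; last first.
  split; first by split => [x|x y z] /=; lia.
  split; first by move=> x y /=; lia.
  split; first by move=> x y h; exact: sub.
  split; first by move=> x y h; exact: sub.
  split; first exact: lt.
  split; first by move=> x y h; exact: sub.
  split; first by move=> x y h; exact: lt.
  by move=> x y [h1 h2]; split; apply: sub.
pose N := #|{set 'I_l}|.+1.
pose jn n := n %/ l %/ l. pose kn n := n %/ l %% l. pose kn' n := n %% l.
pose condA n := kn n < l /\ exists x0, c x0 <= jn n /\ Y (kn n) x0.
pose condB n := kn' n < l /\ exists y0, jn n <= c y0 /\ X (kn' n) y0.
exists (N * l * l), (fun n x => condA n /\ X (kn n) x),
  (fun n y => condB n /\ Y (kn' n) y); split.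
  move=> n _; split.
    case: (pbP (condA n)) => h.
      apply: (omega_regular_ext _ (Hreg _ h.1).1) => w; split => //.
      by case.
    by apply: omega_regular_empty => w [].
  case: (pbP (condB n)) => h.
    apply: (omega_regular_ext _ (Hreg _ h.1).2) => w; split => //.
    by case.
  by apply: omega_regular_empty => w [].
move=> x y; split.
  move=> hxy.
  have [k [hk [hX hY]]] := (HR x x).1 (Hr x).
  have [k' [hk' [hX' hY']]] := (HR y y).1 (Hr y).
  have cN : c x < N by rewrite /c /cnt ltnS max_card.
  have [e1 e2 e3] := encode (c x) hk hk'.
  exists ((c x * l + k) * l + k'); split; first exact: encode_lt.
  rewrite /condA /condB /jn /kn /kn' e1 e2 e3.
  split; split => //; split => //.
    by exists x; split.
  by exists y; split.
move=> [n [hn [[[hk [x0 [c0 hY0]]] hX] [[hk' [y0 [c1 hX1]]] hY]]]].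
have h1 : R x x0 by apply/HR; exists (kn n).
have h2 : R y0 y by apply/HR; exists (kn' n).
have := cm _ _ h1; have := cm _ _ h2; rewrite -/c; lia.
Qed.
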